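(* Let $Z$ be a smooth $3$-dimensional toric variety whose fan contains two maximal cones $\mathrm{cone}(v_1,v_2,v_+)$ and $\mathrm{cone}(v_1,v_2,v_-)$ with $v_1,v_2,v_\pm$ primitive and $v_++v_-=x_1v_1+x_2v_2$, where $x_1,x_2$ are integers with $x_1\ge x_2\ge 0$. Suppose moreover that $x_1\ge 2$. Then the anticanonical bundle of any toric variety obtained from $Z$ by a sequence of blow-ups along torus-invariant subvarieties is not ample.
   Context: Toric varieties are for a 3-dimensional torus $S$, fans in $\chi_*(S)_{\mathbb{R}}$. A blow-up along a torus-invariant subvariety (orbit closure, corresponding to a cone $\tau$ of dimension $\ge2$) of a smooth toric variety is the toric variety obtained by star subdivision of the fan at the sum of the primitive generators of $\tau$. *)

(* Defs.v *)
From HB Require Import structures.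
From mathcomp Require Import all_boot all_order all_algebra.
From mathcomp Require Import finmap.
Set Implicit Arguments. Unset Strict Implicit. Unset Printing Implicit Defensive.
Import Order.TTheory GRing.Theory Num.Theory.
Local Open Scope ring_scope.
Local Open Scope fset_scope.

Definition vec := 'rV[int]_3.

(** A (simplicial) cone is given by its finite set of generators.
    A fan is given by the finite set of all its cones (faces included). *)
Definition gens := {fset vec}.
Definition fan := {fset gens}.

(** Real (here rational; all cones are rational) points of N_R. *)
Definition vecQ (v : vec) : 'rV[rat]_3 := map_mx (fun z : int => z%:~R) v.

Definition in_cone (S : gens) (x : 'rV[rat]_3) : Prop :=
  exists l : vec -> rat, (forall v, 0 <= l v) /\
    x = \sum_(v <- enum_fset S) l v *: vecQ v.

Definition smooth_cone (S : gens) : Prop :=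
  exists M : 'M[int]_3, (\det M = 1 \/ \det M = -1) /\
    (forall v, v \in S -> exists i, row i M = v).

(** A smooth fan in N_R = R^3: every cone smooth, closed under faces
    (faces of a simplicial cone = subsets of its generators), and any two
    cones intersect in a common face. *)
Definition smooth_fan (F : fan) : Prop :=
  [/\ forall S, S \in F -> smooth_cone S,
      forall S T, S \in F -> T `<=` S -> T \in F &
      forall S T x, S \in F -> T \in F -> in_cone S x -> in_cone T x ->
        in_cone (S `&` T) x].

(** Support |F| of the fan, and its convexity (|F| is a cone, so convexity
    amounts to closure under addition). *)
Definition in_support (F : fan) (x : 'rV[rat]_3) : Prop :=
  exists S, S \in F /\ in_cone S x.

Definition convex_support (F : fan) : Prop :=
  forall x y, in_support F x -> in_support F y -> in_support F (x + y)%R.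

Definition is_ray (F : fan) (v : vec) : Prop := [fset v] \in F.

(** Star subdivision of F at the sum of the generators of tau
    (= toric blow-up along the orbit closure V(tau)), cf. CLS 3.3.13:
    cones not containing tau, together with cone(S, u_tau) for S in F
    not containing tau with S cup tau in F. *)
Definition star_sub (F : fan) (tau : gens) : fan :=
  let u := \sum_(v <- enum_fset tau) v in
  [fset S in F | ~~ (tau `<=` S)] `|`
  [fset (S `|` [fset u]) | S in [fset S in F | ~~ (tau `<=` S) && ((S `|` tau) \in F)]].

Definition blowup_step (F F' : fan) : Prop :=
  exists tau, [/\ tau \in F, (2 <= #|` tau|)%N & F' = star_sub F tau].

Inductive blowups : fan -> fan -> Prop :=
| blowups_refl F : blowups F F
| blowups_step F G H : blowup_step F G -> blowups G H -> blowups F H.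

Definition dotQ (m : 'rV[rat]_3) (v : vec) : rat :=
  \sum_(i < 3) m 0 i * (v 0 i)%:~R.

(** Ampleness of the anticanonical divisor -K = sum_rho D_rho (all a_rho = 1)
    of a toric variety whose fan has full-dimensional convex support,
    via the support-function criterion of Cox-Little-Schenck Thm 6.1.14/
    Lemma 6.1.13: for every maximal (3-dimensional) cone sigma, the m_sigma
    with <m_sigma, u_rho> = -1 for rho in sigma(1) satisfies
    <m_sigma, u_rho> > -1 for every ray rho not in sigma. *)
Definition anticanonical_ample (F : fan) : Prop :=
  forall sigma, sigma \in F -> #|` sigma| = 3%N ->
  forall m : 'rV[rat]_3, (forall v, v \in sigma -> dotQ m v = -1) ->
  forall w, is_ray F w -> w \notin sigma -> -1 < dotQ m w.

(* Main.v *)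
Require Import Defs.
From HB Require Import structures.
From mathcomp Require Import all_boot all_order all_algebra.
From mathcomp Require Import finmap.
From mathcomp Require Import zify ring lra.
Import Order.TTheory GRing.Theory Num.Theory.
Set Implicit Arguments. Unset Strict Implicit.
Local Open Scope fset_scope.
Local Open Scope ring_scope.

Notation i0 := (@ord0 2).
Notation i1 := (@lift 3 ord0 (@ord0 1)).
Notation i2 := (@lift 3 ord0 (@lift 2 ord0 (@ord0 0))).

Definition det3 (a b c : vec) : int :=
  a 0 i0 * (b 0 i1 * c 0 i2 - b 0 i2 * c 0 i1)
  - a 0 i1 * (b 0 i0 * c 0 i2 - b 0 i2 * c 0 i0)
  + a 0 i2 * (b 0 i0 * c 0 i1 - b 0 i1 * c 0 i0).

Lemma detM3 (M : 'M[int]_3) : \det M = det3 (row i0 M) (row i1 M) (row i2 M).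
Proof.
pose N (n m : nat) := M (inord n) (inord m).
have E : forall x y : 'I_3, M x y = N x y by move=> x y; rewrite /N !inord_val.
rewrite (expand_det_row M ord0) !big_ord_recl big_ord0 /cofactor.
rewrite !(expand_det_row _ ord0) !big_ord_recl !big_ord0 /cofactor !det_mx11 /det3 !mxE !E /=.
ring.
Qed.

Lemma HI (i : 'I_3) : i = i0 \/ i = i1 \/ i = i2.
Proof.
case: i => [[|[|[|?]]] Hi]; [left|right;left|right;right|] => //; apply: val_inj => //.
Qed.

Lemma det_perm3 (M : 'M[int]_3) i j k : i != j -> i != k -> j != k ->
  det3 (row i M) (row j M) (row k M) = \det M \/
  det3 (row i M) (row j M) (row k M) = - \det M.
Proof.
rewrite detM3.
by case: (HI i) => [->|[->|->]]; case: (HI j) => [->|[->|->]];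
  case: (HI k) => [->|[->|->]] => //= _ _ _; [left|right|right|left|left|right];
  rewrite /det3 !mxE; ring.
Qed.
Definition usum (tau : gens) : vec := \sum_(v <- enum_fset tau) v.


Lemma sum2 (a b : vec) : a != b -> usum [fset a; b] = a + b.
Proof. by move=> ab; rewrite /usum big_fsetU1 ?inE // big_seq_fset1. Qed.

Lemma sum3 (a b c : vec) : a != b -> a != c -> b != c -> usum [fset a; b; c] = a + b + c.
Proof.
move=> ab ac bc.
have -> : [fset a; b; c] = a |` [fset b; c] by apply/fsetP => x; rewrite !inE orbA.
rewrite /usum big_fsetU1 ?inE ?negb_or ?ab ?ac //.
have := sum2 bc; rewrite /usum => ->; exact: addrA.
Qed.

Definition FC (F : fan) := forall S T, S \in F -> T `<=` S -> T \in F.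

Lemma keep F tau S : S \in F -> ~~ (tau `<=` S) -> S \in star_sub F tau.
Proof. by move=> SF nt; rewrite /star_sub in_fsetU !inE SF nt. Qed.

Lemma newc F tau S : S \in F -> ~~ (tau `<=` S) -> (S `|` tau) \in F ->
  S `|` [fset usum tau] \in star_sub F tau.
Proof.
move=> SF nt St; rewrite /star_sub in_fsetU; apply/orP; right.
by apply: in_imfset; rewrite /= !inE SF nt St.
Qed.

Lemma FC_star F tau : FC F -> FC (star_sub F tau).
Proof.
move=> fc S' T H TS; rewrite /star_sub in_fsetU in H; case/orP: H => H.
  rewrite !inE in H; case/andP: H => SF nt; apply: keep; first exact: fc SF TS.
  by apply: contra nt => tT; apply: fsubset_trans tT TS.
case/imfsetP: H => S /= H E; rewrite !inE in H; case/andP: H => SF /andP [nt St].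
rewrite E in TS.
have TdS : T `\ usum tau `<=` S.
  apply/fsubsetP => x; rewrite in_fsetD1 => /andP [xu xT].
  by have := fsubsetP TS x xT; rewrite !inE (negbTE xu) orbF.
have ntT : ~~ (tau `<=` T `\ usum tau).
  by apply: contra nt => tT; apply: fsubset_trans tT TdS.
case uT : (usum tau \in T).
  have -> : T = (T `\ usum tau) `|` [fset usum tau].
    by rewrite fsetUC fsetD1K.
  apply: newc => //; first exact: fc SF TdS.
  apply: (fc _ _ St); exact: fsetSU.
have TT : T `<=` T `\ usum tau.
  by apply/fsubsetP => x xT; rewrite in_fsetD1 xT andbT; apply: contraFneq uT => <-.
apply: keep => //; first by apply: fc SF _; apply: fsubset_trans TT TdS.
by apply: contra ntT => tT; apply: fsubset_trans tT TT.
Qed.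

Ltac dring := rewrite /det3 ?mxE; ring.

Definition cross (u v : vec) : vec := \row_j
  match val j with
  | 0 => u 0 i1 * v 0 i2 - u 0 i2 * v 0 i1
  | 1 => u 0 i2 * v 0 i0 - u 0 i0 * v 0 i2
  | _ => u 0 i0 * v 0 i1 - u 0 i1 * v 0 i0
  end.

Definition idot (c v : vec) : int := \sum_(i < 3) c 0 i * v 0 i.

Lemma idotE c v : idot c v = c 0 i0 * v 0 i0 + c 0 i1 * v 0 i1 + c 0 i2 * v 0 i2.
Proof. by rewrite /idot !big_ord_recl big_ord0 addr0 addrA. Qed.

Lemma dotQ_idot (r : rat) c v : dotQ (r *: vecQ c) v = r * (idot c v)%:~R.
Proof.
rewrite /dotQ /idot rmorph_sum mulr_sumr; apply: eq_bigr => i _.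
by rewrite !mxE rmorphM mulrA.
Qed.

Definition cc (a b p : vec) : vec := cross b p + cross p a + cross a b.

Lemma idot_cc_a a b p : idot (cc a b p) a = det3 a b p.
Proof. rewrite idotE /cc !mxE /=; dring. Qed.
Lemma idot_cc_b a b p : idot (cc a b p) b = det3 a b p.
Proof. rewrite idotE /cc !mxE /=; dring. Qed.
Lemma idot_cc_p a b p : idot (cc a b p) p = det3 a b p.
Proof. rewrite idotE /cc !mxE /=; dring. Qed.
Lemma idot_lin c (a b p : vec) (y1 y2 : int) :
  idot c (y1 *: a + y2 *: b - p) = y1 * idot c a + y2 * idot c b - idot c p.
Proof. rewrite !idotE !mxE; ring. Qed.

Lemma card3 (a b c : vec) : a != b -> a != c -> b != c -> #|` [fset a; b; c]| = 3%N.
Proof.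
move=> ab ac bc.
have -> : [fset a; b; c] = a |` (b |` [fset c]).
  by apply/fsetP => x; rewrite !inE orbA.
by rewrite !cardfsU1 cardfs1 !inE negb_or ab ac bc.
Qed.

Lemma det_neq (a b c : vec) : det3 a b c != 0 -> [/\ a != b, a != c & b != c].
Proof.
move=> D; split; apply: contraNneq D => E; rewrite E; apply/eqP; dring.
Qed.

Lemma bad F a b p (y1 y2 : int) : FC F -> det3 a b p != 0 ->
  [fset a; b; p] \in F -> [fset a; b; y1 *: a + y2 *: b - p] \in F ->
  2 <= y1 + y2 -> ~ anticanonical_ample F.
Proof.
move=> fc D Sp Sm Hy amp.
set m := y1 *: a + y2 *: b - p.
have [ab ap bp] := det_neq D.
have Dm : det3 a b m = - det3 a b p by rewrite /m; dring.
have ma : m != a.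
  apply: contraNneq D => E; have : det3 a b m = 0 by rewrite E; dring.
  by rewrite Dm => /eqP; rewrite oppr_eq0.
have mb : m != b.
  apply: contraNneq D => E; have : det3 a b m = 0 by rewrite E; dring.
  by rewrite Dm => /eqP; rewrite oppr_eq0.
have mp : m != p.
  apply: contraNneq D => E; move: Dm; rewrite E => /eqP; lia.
set f : 'rV[rat]_3 := - ((det3 a b p)%:~R)^-1 *: vecQ (cc a b p).
have Dq : ((det3 a b p)%:~R : rat) != 0 by rewrite intr_eq0.
have Hf : forall v, v \in [fset a; b; p] -> dotQ f v = -1.
  move=> v; rewrite !inE => /orP [/orP [] |] /eqP ->;
  by rewrite dotQ_idot ?idot_cc_a ?idot_cc_b ?idot_cc_p mulNr mulVf.
have := amp _ Sp (card3 ab ap bp) f Hf m.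
have rm : is_ray F m.
  by apply: fc Sm _; apply/fsubsetP => x; rewrite !inE => ->; rewrite orbT.
have mn : m \notin [fset a; b; p] by rewrite !inE !negb_or ma mb mp.
move/(_ rm mn); rewrite /m dotQ_idot idot_lin idot_cc_a idot_cc_b idot_cc_p.
have -> : y1 * det3 a b p + y2 * det3 a b p - det3 a b p = (y1 + y2 - 1) * det3 a b p by ring.
rewrite intrM mulNr mulrCA mulVf // mulr1 ltrN2 => H.
have : (y1 + y2 - 1)%:~R < ((1%:~R) : rat) by [].
rewrite ltr_int => H2.
lia.
Qed.

Ltac bcase x := repeat match goal with |- context [x == ?v] => case: (x == v) end.
Ltac feq := let x := fresh "x" in apply/fsetP => x; rewrite !inE; bcase x; done.
Ltac fsub := let x := fresh "x" in apply/fsubsetP => x; rewrite !inE; bcase x; done.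
Ltac vring := apply/rowP => ?; rewrite !mxE; ring.

Lemma notsub (tau S : gens) x : x \in tau -> x \notin S -> ~~ (tau `<=` S).
Proof. by move=> xt xS; apply/fsubsetPn; exists x. Qed.

Lemma sub3 (tau : gens) a b c : tau `<=` [fset a; b; c] -> (2 <= #|`tau|)%N ->
  tau = [fset a; b] \/ tau = [fset a; c] \/ tau = [fset b; c] \/ tau = [fset a; b; c].
Proof.
move=> /fsubsetP sub ct.
have Hx : forall x, (x \in tau) =
   [|| (x == a) && (a \in tau), (x == b) && (b \in tau) | (x == c) && (c \in tau)].
  move=> x; apply/idP/idP.
    move=> xt; have := sub x xt; rewrite !inE -orbA => /or3P [] /eqP E; subst x;
    by rewrite xt eqxx ?orbT.
  by case/or3P => /andP [/eqP -> ].
have small : forall s : gens, tau `<=` s -> (#|`s| <= 1)%N -> False.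
  move=> s ts cs; have := fsubset_leq_card ts; lia.
case At : (a \in tau); case Bt : (b \in tau); case Ct : (c \in tau).
- by right; right; right; apply/fsetP => x; rewrite Hx At Bt Ct !inE; bcase x.
- by left; apply/fsetP => x; rewrite Hx At Bt Ct !inE; bcase x.
- by right; left; apply/fsetP => x; rewrite Hx At Bt Ct !inE; bcase x.
- exfalso; apply: (small [fset a]); last by rewrite cardfs1.
  by apply/fsubsetP => x; rewrite Hx At Bt Ct !inE; bcase x.
- by right; right; left; apply/fsetP => x; rewrite Hx At Bt Ct !inE; bcase x.
- exfalso; apply: (small [fset b]); last by rewrite cardfs1.
  by apply/fsubsetP => x; rewrite Hx At Bt Ct !inE; bcase x.
- exfalso; apply: (small [fset c]); last by rewrite cardfs1.
  by apply/fsubsetP => x; rewrite Hx At Bt Ct !inE; bcase x.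
- exfalso; apply: (small fset0); last by rewrite cardfs0.
  by apply/fsubsetP => x; rewrite Hx At Bt Ct !inE; bcase x.
Qed.

Lemma neqD (g : vec -> int) x y (al be D : int) :
  D != 0 -> g x = al * D -> g y = be * D -> al != be -> x != y.
Proof.
move=> D0 gx gy ab; apply: contraNneq ab => E.
have : (al - be) * D == 0 by rewrite mulrBl -gx -gy E subrr.
by rewrite mulf_eq0 subr_eq0 (negbTE D0) orbF.
Qed.

Lemma memeq (G : fan) S T : S \in G -> S = T -> T \in G.
Proof. by move=> ? <-. Qed.

Lemma newc' F tau S C : S \in F -> ~~ (tau `<=` S) -> C \in F -> S `|` tau = C ->
  S `|` [fset usum tau] \in star_sub F tau.
Proof. by move=> SF nt CF E; apply: newc => //; rewrite E. Qed.

Definition confA (F : fan) := exists a b p (y1 y2 : int),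
  det3 a b p != 0 /\ [/\ [fset a; b; p] \in F, [fset a; b; y1 *: a + y2 *: b - p] \in F,
      0 <= y1, 0 <= y2 & (2 <= y1) || (2 <= y2)].

Definition confB (F : fan) := exists a b p (k : int),
  det3 a b p != 0 /\ [/\ [fset a; b; p] \in F, [fset a; b; a + b - p] \in F,
      [fset b; p; b + k *: p - a] \in F & 0 <= k].

Lemma mkA G a b p q (y1 y2 : int) : det3 a b p != 0 -> [fset a; b; p] \in G ->
  [fset a; b; q] \in G -> q = y1 *: a + y2 *: b - p -> 0 <= y1 -> 0 <= y2 ->
  (2 <= y1) || (2 <= y2) -> confA G.
Proof. by move=> D Sp Sq E h1 h2 h3; exists a, b, p, y1, y2; rewrite -E. Qed.

Lemma mkB G a b p q r (k : int) : det3 a b p != 0 -> [fset a; b; p] \in G ->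
  [fset a; b; q] \in G -> q = a + b - p -> [fset b; p; r] \in G -> r = b + k *: p - a ->
  0 <= k -> confB G.
Proof. by move=> D Sp Sq Eq Sr Er hk; exists a, b, p, k; rewrite -Eq -Er. Qed.


Ltac clia :=
  repeat match goal with
  | H : ?T |- _ =>
    lazymatch T with
    | is_true (@Order.le _ _ _ _) => fail
    | is_true (@Order.lt _ _ _ _) => fail
    | is_true (_ || _) => fail
    | @eq int _ _ => fail
    | _ => clear H
    end
  end; lia.

Lemma stepP F tau a b p (y1 y2 : int) :
  FC F -> tau \in F -> (2 <= #|`tau|)%N -> det3 a b p != 0 ->
  [fset a; b; p] \in F -> [fset a; b; y1 *: a + y2 *: b - p] \in F ->
  0 <= y1 -> 0 <= y2 -> 2 <= y1 + y2 ->
  tau `<=` [fset a; b; p] -> tau != [fset a; b] -> confA (star_sub F tau).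
Proof.
move=> fc tF ct D Sp Sm h1 h2 h12 sub nab.
have [ab ap bp] := det_neq D.
have pm : p != y1 *: a + y2 *: b - p.
  apply: (neqD (g := fun v => det3 a b v) (al := 1) (be := -1) D); rewrite //=; dring.
have pnm : p \notin [fset a; b; y1 *: a + y2 *: b - p].
  by rewrite !inE !negb_or pm eq_sym ap eq_sym bp.
have pnab : p \notin [fset a; b] by rewrite !inE negb_or eq_sym ap eq_sym bp.
have Sab : [fset a; b] \in F by apply: fc Sp _; fsub.
case: (sub3 sub ct) => [E|[E|[E|E]]]; subst tau.
- by rewrite eqxx in nab.
- have pt : p \in [fset a; p] by rewrite !inE eqxx !orbT.
  have Hn := newc' Sab (notsub pt pnab) Sp ltac:(feq).
  have Hk := keep Sm (notsub pt pnm).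
  rewrite sum2 // in Hn.
  apply: (mkA (p := a + p) (y1 := y1 + 1) (y2 := y2) _ Hn Hk).
  + by have -> : det3 a b (a + p) = det3 a b p by dring.
  + vring.
  + clia.
  + clia.
  + apply/orP; clia.
- have pt : p \in [fset b; p] by rewrite !inE eqxx !orbT.
  have Hn := newc' Sab (notsub pt pnab) Sp ltac:(feq).
  have Hk := keep Sm (notsub pt pnm).
  rewrite sum2 // in Hn.
  apply: (mkA (p := b + p) (y1 := y1) (y2 := y2 + 1) _ Hn Hk).
  + by have -> : det3 a b (b + p) = det3 a b p by dring.
  + vring.
  + clia.
  + clia.
  + apply/orP; clia.
- have pt : p \in [fset a; b; p] by rewrite !inE eqxx !orbT.
  have Hn := newc' Sab (notsub pt pnab) Sp ltac:(feq).
  have Hk := keep Sm (notsub pt pnm).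
  rewrite sum3 // in Hn.
  apply: (mkA (p := a + b + p) (y1 := y1 + 1) (y2 := y2 + 1) _ Hn Hk).
  + by have -> : det3 a b (a + b + p) = det3 a b p by dring.
  + vring.
  + clia.
  + clia.
  + apply/orP; clia.
Qed.

Lemma wallA F a b p (y1 y2 : int) :
  FC F -> det3 a b p != 0 ->
  [fset a; b; p] \in F -> [fset a; b; y1 *: a + y2 *: b - p] \in F ->
  0 <= y1 -> 0 <= y2 -> (2 <= y1) || (2 <= y2) ->
  confA (star_sub F [fset a; b]) \/ confB (star_sub F [fset a; b]).
Proof.
move=> fc D Sp Sm h1 h2 h12.
have [ab ap bp] := det_neq D.
have am : a != y1 *: a + y2 *: b - p.
  apply: (neqD (g := fun v => det3 a b v) (al := 0) (be := -1) D); rewrite //=; dring.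
have bm : b != y1 *: a + y2 *: b - p.
  apply: (neqD (g := fun v => det3 a b v) (al := 0) (be := -1) D); rewrite //=; dring.
have Sap : [fset a; p] \in F by apply: fc Sp _; fsub.
have Sbp : [fset b; p] \in F by apply: fc Sp _; fsub.
have Sam : [fset a; y1 *: a + y2 *: b - p] \in F by apply: fc Sm _; fsub.
have Sbm : [fset b; y1 *: a + y2 *: b - p] \in F by apply: fc Sm _; fsub.
have at_ : a \in [fset a; b] by rewrite !inE eqxx.
have bt : b \in [fset a; b] by rewrite !inE eqxx orbT.
have n1 : b \notin [fset a; p] by rewrite !inE negb_or eq_sym ab bp.
have n2 : b \notin [fset a; y1 *: a + y2 *: b - p] by rewrite !inE negb_or eq_sym ab bm.
have n3 : a \notin [fset b; p] by rewrite !inE negb_or ab ap.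
have n4 : a \notin [fset b; y1 *: a + y2 *: b - p] by rewrite !inE negb_or ab am.
have N1 := newc' Sap (notsub bt n1) Sp ltac:(feq).
have N2 := newc' Sam (notsub bt n2) Sm ltac:(feq).
have N3 := newc' Sbp (notsub at_ n3) Sp ltac:(feq).
have N4 := newc' Sbm (notsub at_ n4) Sm ltac:(feq).
rewrite sum2 // in N1 N2 N3 N4.
have C1 : [fset a; a + b; p] \in star_sub F [fset a; b] by apply: (memeq N1); feq.
have C2 : [fset a; a + b; y1 *: a + y2 *: b - p] \in star_sub F [fset a; b] by apply: (memeq N2); feq.
have C3 : [fset a + b; b; p] \in star_sub F [fset a; b] by apply: (memeq N3); feq.
have C4 : [fset a + b; b; y1 *: a + y2 *: b - p] \in star_sub F [fset a; b] by apply: (memeq N4); feq.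
have C5 : [fset a + b; p; b] \in star_sub F [fset a; b] by apply: (memeq N3); feq.
have C6 : [fset b; a + b; p] \in star_sub F [fset a; b] by apply: (memeq N3); feq.
have C7 : [fset b; a + b; y1 *: a + y2 *: b - p] \in star_sub F [fset a; b] by apply: (memeq N4); feq.
have C8 : [fset a + b; p; a] \in star_sub F [fset a; b] by apply: (memeq N1); feq.
have [le|lt] := lerP y2 y1.
- case E: ((2 <= y1 - y2) || (2 <= y2)).
    left; apply: (mkA (b := a + b) (y1 := y1 - y2) (y2 := y2) _
                     C1 C2).
    + by have -> : det3 a (a + b) p = det3 a b p by dring.
    + vring.
    + clia.
    + clia.
    + done.
  have [e1 e2] : y1 = 2 /\ y2 = 1.
    move/negbT: E; rewrite negb_or -!ltNge => /andP [H1 H2]; move/orP: h12; clia.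
  subst y1 y2.
  right; apply: (mkB (b := a + b) (r := b) (k := 0) _ C1 C2 _ C5).
  + by have -> : det3 a (a + b) p = det3 a b p by dring.
  + vring.
  + vring.
  + done.
- case E: ((2 <= y1) || (2 <= y2 - y1)).
    left; apply: (mkA (a := a + b) (y1 := y1) (y2 := y2 - y1) _
                     C3 C4).
    + by have -> : det3 (a + b) b p = det3 a b p by dring.
    + vring.
    + clia.
    + clia.
    + done.
  have [e1 e2] : y1 = 1 /\ y2 = 2.
    move/negbT: E; rewrite negb_or -!ltNge => /andP [H1 H2]; move/orP: h12; clia.
  subst y1 y2.
  right; apply: (mkB (a := b) (b := a + b) (r := a) (k := 0) _ C6 C7 _ C8).
  + have -> : det3 b (a + b) p = - det3 a b p by dring.
    by rewrite oppr_eq0.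
  + vring.
  + vring.
  + done.
Qed.

Lemma wallB F a b p (k : int) :
  FC F -> det3 a b p != 0 -> [fset a; b; p] \in F ->
  [fset b; p; b + k *: p - a] \in F -> 0 <= k -> confA (star_sub F [fset a; b]).
Proof.
move=> fc D Sp Sc hk.
have [ab ap bp] := det_neq D.
have ac : a != b + k *: p - a.
  apply: (neqD (g := fun v => det3 v b p) (al := 1) (be := -1) D); rewrite //=; dring.
have Sbp : [fset b; p] \in F by apply: fc Sp _; fsub.
have at_ : a \in [fset a; b] by rewrite !inE eqxx.
have n3 : a \notin [fset b; p] by rewrite !inE negb_or ab ap.
have nc : a \notin [fset b; p; b + k *: p - a] by rewrite !inE !negb_or ab ap ac.
have N3 := newc' Sbp (notsub at_ n3) Sp ltac:(feq).
have Kc := keep Sc (notsub at_ nc).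
rewrite sum2 // in N3.
apply: (mkA (a := b) (b := p) (p := a + b) (y1 := 2) (y2 := k) _ N3 Kc).
+ by have -> : det3 b p (a + b) = det3 a b p by dring.
+ vring.
+ done.
+ done.
+ done.
Qed.

Lemma stepA F tau : FC F -> tau \in F -> (2 <= #|`tau|)%N -> confA F ->
  confA (star_sub F tau) \/ confB (star_sub F tau).
Proof.
move=> fc tF ct [a [b [p [y1 [y2 [D [Sp Sm h1 h2 h12]]]]]]].
have h12' : 2 <= y1 + y2 by move/orP: h12; clia.
case sp : (tau `<=` [fset a; b; p]).
  case tab : (tau == [fset a; b]).
    by rewrite (eqP tab); apply: (wallA fc D Sp Sm h1 h2 h12).
  by left; apply: (stepP fc tF ct D Sp Sm) => //; rewrite tab.
case sm : (tau `<=` [fset a; b; y1 *: a + y2 *: b - p]).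
  left; apply: (stepP (p := y1 *: a + y2 *: b - p) (y1 := y1) (y2 := y2) fc tF ct _ Sm) => //.
  + have -> : det3 a b (y1 *: a + y2 *: b - p) = - det3 a b p by dring.
    by rewrite oppr_eq0.
  + by apply: (memeq Sp); congr [fset _; _; _]; vring.
  + apply: contraFneq sp => ->; fsub.
left; apply: (mkA _ (keep Sp (negbT sp)) (keep Sm (negbT sm))) => //.
Qed.

Lemma stepB F tau : FC F -> tau \in F -> (2 <= #|`tau|)%N -> confB F ->
  confA (star_sub F tau) \/ confB (star_sub F tau).
Proof.
move=> fc tF ct [a [b [p [k [D [Sp Sm Sc hk]]]]]].
have [ab ap bp] := det_neq D.
have Sm1 : [fset a; b; 1 *: a + 1 *: b - p] \in F by rewrite !scale1r.
case sp : (tau `<=` [fset a; b; p]).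
  case tab : (tau == [fset a; b]).
    by rewrite (eqP tab); left; apply: wallB Sc hk.
  by left; apply: (stepP fc tF ct D Sp Sm1) => //; rewrite tab.
case sm : (tau `<=` [fset a; b; a + b - p]).
  left; apply: (stepP (p := a + b - p) (y1 := 1) (y2 := 1) fc tF ct _ Sm) => //.
  + have -> : det3 a b (a + b - p) = - det3 a b p by dring.
    by rewrite oppr_eq0.
  + by apply: (memeq Sp); congr [fset _; _; _]; vring.
  + apply: contraFneq sp => ->; fsub.
have cb : b != b + k *: p - a.
  apply: (neqD (g := fun v => det3 v b p) (al := 0) (be := -1) D); rewrite //=; dring.
have cp : p != b + k *: p - a.
  apply: (neqD (g := fun v => det3 v b p) (al := 0) (be := -1) D); rewrite //=; dring.
have ca : a != b + k *: p - a.
  apply: (neqD (g := fun v => det3 v b p) (al := 1) (be := -1) D); rewrite //=; dring.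
have cm : a + b - p != b + k *: p - a.
  apply: (neqD (g := fun v => det3 v b p) (al := 1) (be := -1) D); rewrite //=; dring.
have cnm : b + k *: p - a \notin [fset a; b; a + b - p].
  by rewrite !inE !negb_or eq_sym ca eq_sym cb eq_sym cm.
have cnbp : b + k *: p - a \notin [fset b; p].
  by rewrite !inE !negb_or eq_sym cb eq_sym cp.
have Sbp : [fset b; p] \in F by apply: fc Sp _; fsub.
have Kp := keep Sp (negbT sp).
have Km := keep Sm (negbT sm).
have Kp' : [fset b; p; a] \in star_sub F tau by apply: (memeq Kp); feq.
case sc : (tau `<=` [fset b; p; b + k *: p - a]); last first.
  by right; apply: (mkB _ Kp Km _ (keep Sc (negbT sc))).
case: (sub3 sc ct) => [E|[E|[E|E]]]; subst tau.
- by move: sp; rewrite (_ : [fset b; p] `<=` [fset a; b; p]) //; fsub.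
- have ct_ : b + k *: p - a \in [fset b; b + k *: p - a] by rewrite !inE eqxx !orbT.
  have N := newc' Sbp (notsub ct_ cnbp) Sc ltac:(feq).
  rewrite sum2 // in N.
  left; apply: (mkA (a := b) (b := p) (p := a) (y1 := 2) (y2 := k) _
                Kp' N).
  + by have -> : det3 b p a = det3 a b p by dring.
  + vring.
  + done.
  + done.
  + done.
- have ct_ : b + k *: p - a \in [fset p; b + k *: p - a] by rewrite !inE eqxx !orbT.
  have N := newc' Sbp (notsub ct_ cnbp) Sc ltac:(feq).
  rewrite sum2 // in N.
  right; apply: (mkB (k := k + 1) D Kp Km _ N).
  + by [].
  + vring.
  + clia.
- have ct_ : b + k *: p - a \in [fset b; p; b + k *: p - a] by rewrite !inE eqxx !orbT.
  have N := newc' Sbp (notsub ct_ cnbp) Sc ltac:(feq).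
  rewrite sum3 // in N.
  left; apply: (mkA (a := b) (b := p) (p := a) (y1 := 2) (y2 := k + 1) _
                Kp' N).
  + by have -> : det3 b p a = det3 a b p by dring.
  + vring.
  + done.
  + clia.
  + done.
Qed.

Lemma card3_neq (a b c : vec) : #|` [fset a; b; c]| = 3%N -> [/\ a != b, a != c & b != c].
Proof.
move=> H; split; apply/negP => /eqP E; subst; move: H.
- by rewrite (_ : [fset b; b; c] = [fset b; c]) ?cardfs2; [case: (_ != _) | feq].
- by rewrite (_ : [fset c; b; c] = [fset c; b]) ?cardfs2; [case: (_ != _) | feq].
- by rewrite (_ : [fset a; c; c] = [fset a; c]) ?cardfs2; [case: (_ != _) | feq].
Qed.

Lemma smooth_det (S : gens) a b c : smooth_cone S -> S = [fset a; b; c] ->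
  #|` S| = 3%N -> det3 a b c != 0.
Proof.
move=> [M [dM rM]] ES cS; rewrite ES in rM cS.
have [ab ac bc] := card3_neq cS.
have [i Ri] := rM a ltac:(by rewrite !inE eqxx).
have [j Rj] := rM b ltac:(by rewrite !inE eqxx !orbT).
have [k Rk] := rM c ltac:(by rewrite !inE eqxx !orbT).
have ij : i != j by apply: contraNneq ab => E; rewrite -Ri -Rj E.
have ik : i != k by apply: contraNneq ac => E; rewrite -Ri -Rk E.
have jk : j != k by apply: contraNneq bc => E; rewrite -Rj -Rk E.
rewrite -Ri -Rj -Rk.
by case: (det_perm3 M ij ik jk) => ->; case: dM => ->.
Qed.

Lemma final F G : blowups F G -> FC F -> (confA F \/ confB F) -> ~ anticanonical_ample G.
Proof.
elim => {F G} [F|F G H [tau [tF ct ->]] _ IH] fc hc.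
  case: hc => [[a [b [p [y1 [y2 [D [Sp Sm h1 h2 h12]]]]]]]|[a [b [p [k [D [Sp Sm Sc hk]]]]]]].
    by apply: (bad fc D Sp Sm); move/orP: h12; clia.
  have Sm1 : [fset a; b; 1 *: a + 1 *: b - p] \in F by rewrite !scale1r.
  by apply: (bad fc D Sp Sm1).
apply: IH; first exact: FC_star.
by case: hc => hc; [apply: stepA | apply: stepB].
Qed.

Local Open Scope ring_scope.
Local Open Scope fset_scope.

Theorem lemma4p1 (Z : fan) (v1 v2 vp vm : vec) (x1 x2 : int) :
  smooth_fan Z -> convex_support Z ->
  [fset v1; v2; vp] \in Z -> #|` [fset v1; v2; vp]| = 3%N ->
  [fset v1; v2; vm] \in Z -> #|` [fset v1; v2; vm]| = 3%N ->
  (vp + vm = x1 *: v1 + x2 *: v2)%R ->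
  (0 <= x2)%R -> (x2 <= x1)%R -> (2 <= x1)%R ->
  forall Z' : fan, blowups Z Z' -> ~ anticanonical_ample Z'.
Proof.
move=> [sm fc _] _ Sp cp Sm _ H h2 _ h1 Z' bl.
apply: (final bl fc); left.
exists v1, v2, vp, x1, x2; split.
  exact: (smooth_det (sm _ Sp) erefl cp).
have -> : (x1 *: v1 + x2 *: v2 - vp)%R = vm by rewrite -H addrAC subrr add0r.
split => //; [clia | by rewrite h1].
Qed.
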